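(* Let $A$ be an associative ring, $n\ge2$, $1\le k\le n-1$, $a\in A$. For any $\omega\in Br_n$ (viewed in $Br_n(A)$ via $y_i\mapsto y_i^0$), the element $\omega\, y_k^a (y_k^0)^{-1}\omega^{-1}\in Br_n(A)$ depends only on the image $\bar\omega$ of $\omega$ in $\mathcal S_n$. Moreover, if $\bar\omega(j)=k$ and $\bar\omega(j+1)=k+1$, then $\omega\, y_k^a (y_k^0)^{-1}\omega^{-1} = y_j^a (y_j^0)^{-1}$.
   Context: $Br_n(A)$ is the group generated by $y_i^a$, $1\le i\le n-1$, $a\in A$, with relations for all $a,b,c\in A$: $y_i^a y_i^0 y_i^b = y_i^0 y_i^0 y_i^{a+b}$; $y_i^a y_j^b = y_j^b y_i^a$ if $|i-j|\ge 2$; $y_i^a y_{i+1}^b y_i^c = y_{i+1}^c y_i^{b+ac} y_{i+1}^a$. $Br_n$ is the Artin braid group (generators $y_i$, relations $y_iy_j=y_jy_i$ for $|i-j|\ge 2$, $y_iy_{i+1}y_i=y_{i+1}y_iy_{i+1}$), identified with the subgroup of $Br_n(A)$ generated by the $y_i^0$; $\bar\omega$ denotes the image of $\omega$ under the surjection $Br_n\to\mathcal S_n$, $y_i\mapsto(i\ i+1)$. *)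

(* Defs.v *)
From mathcomp Require Import all_boot all_order all_algebra.
Set Implicit Arguments. Unset Strict Implicit. Unset Printing Implicit Defensive.
Import GRing.Theory.
Local Open Scope ring_scope.

(* A letter of a word in the generators of Br_n(A):
   (i, a, false) is y_i^a and (i, a, true) is (y_i^a)^{-1}.  Indices are 1-based. *)
Definition letter (A : Type) := (nat * A * bool)%type.
Definition word (A : Type) := seq (letter A).

Definition inv_letter (A : Type) (l : letter A) : letter A :=
  let: (i, a, e) := l in (i, a, ~~ e).
Definition inv_word (A : Type) (w : word A) : word A := rev (map (@inv_letter A) w).

Definition y (A : Type) (i : nat) (a : A) : letter A := (i, a, false).
Definition yinv (A : Type) (i : nat) (a : A) : letter A := (i, a, true).

Definition gen_ok (n i : nat) : bool := (1 <= i <= n.-1)%N.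

(* Equality in the group Br_n(A) presented by generators y_i^a (1 <= i <= n-1,
   a in A) and the relations of the paper: the smallest congruence on words
   containing free cancellation and the defining relations. *)
Inductive breq (A : pzRingType) (n : nat) : word A -> word A -> Prop :=
| breq_refl w : breq n w w
| breq_sym u v : breq n u v -> breq n v u
| breq_trans u v w : breq n u v -> breq n v w -> breq n u w
| breq_cat u u' v v' : breq n u u' -> breq n v v' -> breq n (u ++ v) (u' ++ v')
| breq_invr i a : gen_ok n i -> breq n [:: y i a; yinv i a] [::]
| breq_invl i a : gen_ok n i -> breq n [:: yinv i a; y i a] [::]
| breq_rel1 i a b : gen_ok n i ->
    breq n [:: y i a; y i 0; y i b] [:: y i 0; y i 0; y i (a + b)]
| breq_rel2 i j a b : gen_ok n i -> gen_ok n j -> (2 <= `|(i%:Z - j%:Z)|)%N ->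
    breq n [:: y i a; y j b] [:: y j b; y i a]
| breq_rel3 i a b c : gen_ok n i -> gen_ok n i.+1 ->
    breq n [:: y i a; y i.+1 b; y i c] [:: y i.+1 c; y i (b + a * c); y i.+1 a].

(* Words in the Artin generators of Br_n: (i, false) is y_i, (i, true) is y_i^{-1}. *)
Definition bword := seq (nat * bool).
Definition bword_ok (n : nat) (w : bword) : bool := all (fun l => gen_ok n l.1) w.

Definition emb (A : pzRingType) (w : bword) : word A :=
  map (fun l => (l.1, 0 : A, l.2)) w.

Definition swap (i x : nat) : nat :=
  if x == i then i.+1 else if x == i.+1 then i else x.

(* The image \bar\omega in S_n, as a map on {1..n}: the image of y_i is (i i+1),
   and products follow the convention (s t)(x) = t (s x) (as for mathcomp perms),
   i.e. the word y_{i1} ... y_{ir} acts by applying (i1 i1+1) first. *)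
Definition bar (w : bword) : nat -> nat :=
  foldl (fun f l => fun x => swap l.1 (f x)) id w.

Definition conjk (A : pzRingType) (w : bword) (k : nat) (a : A) : word A :=
  emb A w ++ [:: y k a; yinv k 0] ++ inv_word (emb A w).
Arguments emb A w : clear implicits.
Arguments conjk A w k a : clear implicits.

(* Main.v *)
Require Import Defs.
From HB Require Import structures.
From mathcomp Require Import all_boot all_order all_algebra.
From mathcomp Require Import zify.
From mathcomp Require Import boolp.
From Stdlib Require Import Classical_Prop ProofIrrelevance IndefiniteDescription.
Set Implicit Arguments. Unset Strict Implicit. Unset Printing Implicit Defensive.

Section GroupFacts.
Variable G : groupType.
Local Open Scope group_scope.
Implicit Types g h u z : G.
Definition cj g z := g * z * g^-1.

Ltac gs1 := rewrite ?mulgA ?mulgK ?mulgVK ?mulVg ?mulgV ?mul1g ?mulg1.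

Lemma cjM g h z : cj (g * h) z = cj g (cj h z).
Proof. by rewrite /cj invgM !mulgA. Qed.
Lemma cjK g z : cj g^-1 (cj g z) = z.
Proof. by rewrite /cj invgK; gs1. Qed.
Lemma cjKV g z : cj g (cj g^-1 z) = z.
Proof. by rewrite -{1}(invgK g) cjK. Qed.
Lemma cj_comm g z : commute g z -> cj g z = z.
Proof. by rewrite /cj => ->; rewrite mulgK. Qed.
Lemma cjMg g u z : cj g (u * z) = cj g u * cj g z.
Proof. rewrite /cj !mulgA mulgVK //. Qed.
Lemma cjVg g z : cj g z^-1 = (cj g z)^-1.
Proof. by rewrite /cj !invgM invgK !mulgA. Qed.
Lemma cjE g z w : g * z = w * g -> cj g z = w.
Proof. by rewrite /cj => ->; rewrite mulgK. Qed.
Lemma commute_cj u g z : commute u g -> commute u z -> commute u (cj g z).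
Proof. move=> h1 h2; apply: commuteM; [apply: commuteM|] => //; exact: commuteV. Qed.
Lemma cj_eq g h z : commute (h^-1 * g) z -> cj g z = cj h z.
Proof. move=> c; by rewrite -{1}(mulVKg h g) cjM (cj_comm c). Qed.
Lemma cj_inj g z1 z2 : cj g z1 = cj g z2 -> z1 = z2.
Proof. by move=> e; rewrite -(cjK g z1) e cjK. Qed.
Lemma commute_cjP g z : cj g z = z -> commute g z.
Proof. rewrite /cj => e. by rewrite /commute -{2}e mulgVK. Qed.
End GroupFacts.


Import GRing.Theory.
Section Abstract.
Variables (A : pzRingType) (G : groupType) (n : nat) (Y : nat -> A -> G) (a : A).
Local Open Scope group_scope.
Hypothesis R1 : forall i b c, gen_ok n i ->
  Y i b * Y i 0%R * Y i c = Y i 0%R * Y i 0%R * Y i (b + c)%R.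
Hypothesis R2 : forall i j b c, gen_ok n i -> gen_ok n j ->
  (i + 2 <= j)%N \/ (j + 2 <= i)%N -> Y i b * Y j c = Y j c * Y i b.
Hypothesis R3 : forall i b c d, gen_ok n i -> gen_ok n i.+1 ->
  Y i b * Y i.+1 c * Y i d = Y i.+1 d * Y i (c + b * d)%R * Y i.+1 b.

Definition s i := Y i 0%R.
Definition x i := Y i a * (s i)^-1.

Ltac gs := rewrite ?mulgA ?mulgK ?mulgVK ?mulVg ?mulgV ?mul1g ?mulg1.


Lemma braid i : gen_ok n i -> gen_ok n i.+1 -> s i * s i.+1 * s i = s i.+1 * s i * s i.+1.
Proof. by move=> hi hi1; have := R3 0%R 0%R 0%R hi hi1; rewrite mulr0 addr0. Qed.

Lemma F1 i : gen_ok n i -> gen_ok n i.+1 -> cj (s i * s i.+1) (x i) = x i.+1.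
Proof.
move=> hi hi1.
rewrite /x cjMg cjVg; congr (_ * _^-1); apply: cjE.
  have := R3 0%R 0%R a hi hi1; rewrite mul0r addr0 => e.
  by rewrite /s e !mulgA.
by rewrite mulgA braid.
Qed.

Lemma F2 i : gen_ok n i -> gen_ok n i.+1 -> cj (s i.+1 * s i) (x i.+1) = x i.
Proof.
move=> hi hi1.
rewrite /x cjMg cjVg; congr (_ * _^-1); apply: cjE.
  have := R3 a 0%R 0%R hi hi1; rewrite mulr0 addr0 => e.
  by rewrite mulgA /s e.
by rewrite mulgA braid.
Qed.

Lemma F3 i : gen_ok n i -> gen_ok n i.+1 -> cj (s i) (x i.+1) = cj (s i.+1) (x i).
Proof.
move=> hi hi1.
have e := R3 0%R a 0%R hi hi1; rewrite mulr0 addr0 in e.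
rewrite /cj /x.
transitivity ((s i * Y (i.+1) a * s i) * (s i * s i.+1 * s i)^-1).
  by rewrite !invgM; gs.
rewrite /s e -/(s i) -/(s i.+1) braid //.
by rewrite !invgM; gs.
Qed.

Lemma F4 i : gen_ok n i -> cj (s i * s i) (x i) = x i.
Proof.
move=> hi.
have e := R1 a 0%R hi; rewrite addr0 in e.
rewrite /x cjMg cjVg; congr (_ * _^-1); apply: cj_comm.
  by rewrite /commute /s -e mulgA.
by rewrite /commute mulgA.
Qed.

Lemma far_ss i j : gen_ok n i -> gen_ok n j -> (i + 2 <= j)%N \/ (j + 2 <= i)%N ->
  commute (s i) (s j).
Proof. move=> hi hj h; exact: R2. Qed.

Lemma far_sx i j : gen_ok n i -> gen_ok n j -> (i + 2 <= j)%N \/ (j + 2 <= i)%N ->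
  commute (s i) (x j).
Proof.
move=> hi hj h; apply: commuteM; first exact: R2.
by apply: commuteV; apply: R2.
Qed.

Lemma Lsq1 i : gen_ok n i -> gen_ok n i.+1 -> cj (s i.+1 * s i.+1) (x i) = x i.
Proof. move=> hi hi1. by rewrite cjM -F3 // -cjM F2. Qed.

Lemma Lsq2 i : gen_ok n i -> gen_ok n i.+1 -> cj (s i * s i) (x i.+1) = x i.+1.
Proof. move=> hi hi1. by rewrite cjM F3 // -cjM F1. Qed.


Lemma mkok i : (1 <= i)%N -> (i < n)%N -> gen_ok n i.
Proof. rewrite /gen_ok; lia. Qed.
Lemma okE i : gen_ok n i -> (1 <= i)%N /\ (i < n)%N.
Proof. rewrite /gen_ok; lia. Qed.

Ltac ok := apply: mkok; lia.
Ltac gss := repeat progress rewrite ?mulgA ?mulgK ?mulgVK ?mulVg ?mulgV ?mul1g ?mulg1.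

Lemma braid_cj j : (1 <= j)%N -> (j.+1 < n)%N ->
  cj (s j)^-1 (s j.+1) = cj (s j.+1) (s j).
Proof.
move=> h1 h2; rewrite /cj invgK.
apply: (mulgI (s j)); apply: (mulIg (s j.+1)); gss.
by rewrite braid //; ok.
Qed.

Lemma cj_cj (g h z : G) : cj (cj g h) z = cj g (cj h (cj g^-1 z)).
Proof. by rewrite /cj !invgM invgK !mulgA. Qed.

Lemma cj_swap (g h z : G) : commute g h -> cj g (cj h z) = cj h (cj g z).
Proof. by move=> c; rewrite -!cjM c. Qed.

Lemma commute_inv (g z : G) : commute g z -> commute g^-1 z.
Proof. by move=> c; apply: commute_sym; apply: commuteV; apply: commute_sym. Qed.

Lemma GL1 j (V : G) : (1 <= j)%N -> (j.+1 < n)%N -> cj (s j * s j) V = V ->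
  commute (s j.+1) V -> cj (s j.+1 * s j.+1) (cj (s j) V) = cj (s j) V.
Proof.
move=> h1 h2 e c.
rewrite -cjM.
have -> : s j.+1 * s j.+1 * s j = s j * cj (s j.+1) (s j * s j).
  rewrite cjMg -(braid_cj h1 h2) /cj invgK. by gss.
rewrite cjM cj_cj (cj_comm (commute_inv c)) e (cj_comm c) //.
Qed.

Lemma GL2 j (W : G) : (1 <= j)%N -> (j.+1 < n)%N -> commute (s j.+1) W ->
  cj (s j) (cj (s j.+1) (cj (s j) W)) = cj (s j.+1) (cj (s j) W).
Proof.
move=> h1 h2 c.
rewrite -!cjM braid; try ok.
by rewrite cjM (cj_comm c).
Qed.

Definition base (b : bool) p := if b then cj (s p) (x p) else x p.
Fixpoint Vm b p m := match m with
  | 0 => base b p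
  | m'.+1 => cj (s (p + m)) (Vm b p m') end.

Lemma Vm_commute (g : G) b p m :
  (forall j, (p <= j <= p + m)%N -> commute g (s j) /\ commute g (x j)) ->
  commute g (Vm b p m).
Proof.
elim: m => [|m IH] H /=.
  have [h1 h2] := H p (ltac:(lia)).
  by case: b => //=; apply: commute_cj.
apply: commute_cj.
  by have [] := H (p + m.+1) (ltac:(lia)).
apply: IH => j hj; apply: H; lia.
Qed.

Lemma Vm_far b p m i : (1 <= p)%N -> (p + m + 1 <= n)%N -> gen_ok n i ->
  (i + 2 <= p)%N \/ (p + m + 2 <= i)%N -> commute (s i) (Vm b p m).
Proof.
move=> h1 h2 hi h3; apply: Vm_commute => j hj; split.
  apply: far_ss => //; [ok|lia].
apply: far_sx => //; [ok|lia].
Qed.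

Lemma SQ b p m : (1 <= p)%N -> (p + m + 2 <= n)%N ->
  cj (s (p + m + 1) * s (p + m + 1)) (Vm b p m) = Vm b p m.
Proof.
move=> h1; elim: m => [|m IH] h2 /=.
  rewrite addn0 addn1.
  case: b => /=; last by apply: Lsq1; ok.
  rewrite -(F2 (i:=p)); try ok.
  rewrite -!cjM.
  have -> : s p.+1 * s p.+1 * s p * (s p.+1 * s p) =
            (s p * (s p.+1 * s p)) * (s p * s p).
    have eb := braid (mkok (i:=p) h1 (ltac:(lia))) (mkok (i:=p.+1) (ltac:(lia)) (ltac:(lia))).
    transitivity (s p.+1 * (s p.+1 * s p * s p.+1) * s p); first by rewrite !mulgA.
    rewrite -eb.
    transitivity ((s p * s p.+1 * s p) * s p * s p); last by rewrite !mulgA.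
    by rewrite [in RHS]eb !mulgA.
  by rewrite cjM Lsq2 //; ok.
have e := IH (ltac:(lia)).
have -> : (p + m.+1 + 1 = (p + m + 1).+1)%N by lia.
have -> : (p + m.+1 = p + m + 1)%N by lia.
apply: GL1; [lia|lia| |].
  by [].
apply: Vm_far => //; [lia|ok|lia].
Qed.

Lemma MID b p m i : (1 <= p)%N -> (p + m + 1 <= n)%N -> (p < i)%N -> (i + 2 <= p + m + 1)%N ->
  cj (s i) (Vm b p m) = Vm b p m.
Proof.
move=> h1; elim: m => [|m IH] h2 h3 h4; first lia.
have [lt|eq] : (i + 2 <= p + m + 1)%N \/ (i = p + m)%N by lia.
  apply: cj_comm => /=; apply: commute_cj.
    apply: far_ss; [ok|ok|lia].
  by apply: commute_cjP; apply: IH => //; lia.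
case: m IH h2 h4 eq => [|m] IH h2 h4 eq; first lia.
rewrite /=.
have -> : (p + m.+2 = i.+1)%N by lia.
have -> : (p + m.+1 = i)%N by lia.
apply: GL2; [lia|lia|].
apply: Vm_far; [lia|lia|ok|lia].
Qed.

Lemma LEFT b p m : (1 <= p)%N -> (p + m + 2 <= n)%N ->
  cj (s p) (Vm b p.+1 m) = Vm b p m.+1.
Proof.
move=> h1; elim: m => [|m IH] h2.
  rewrite /= addn1.
  case: b => /=; last by apply: F3; ok.
  rewrite -(F1 (i:=p)); try ok.
  rewrite -!cjM; apply: cj_eq; apply: commute_cjP.
  have -> : (s p.+1 * s p)^-1 * (s p * s p.+1 * (s p * s p.+1)) = s p.+1 * s p.+1.
    apply: (mulgI (s p.+1 * s p)); rewrite mulVKg.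
    have eb := braid (mkok (i:=p) h1 (ltac:(lia))) (mkok (i:=p.+1) (ltac:(lia)) (ltac:(lia))).
    by rewrite !mulgA eb.
  by apply: Lsq1; ok.
rewrite /=.
rewrite cj_swap; last by apply: far_ss; [ok|ok|lia].
rewrite IH; last lia.
by have -> : (p.+1 + m.+1 = p + m.+2)%N by lia.
Qed.

Lemma RIGHT b p m : (1 <= p)%N -> (p + m + 2 <= n)%N ->
  cj (s p) (Vm b p m.+1) = Vm b p.+1 m.
Proof.
move=> h1; elim: m => [|m IH] h2.
  rewrite /= addn1.
  case: b => /=; last by rewrite -cjM F1 //; ok.
  rewrite -!cjM braid; try ok.
  by rewrite -mulgA cjM F1 //; ok.
rewrite [Vm b p m.+2]/=.
rewrite cj_swap; last by apply: far_ss; [ok|ok|lia].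
rewrite IH; last lia.
by have -> : (p + m.+2 = p.+1 + m.+1)%N by lia.
Qed.

Lemma BASE b p : (1 <= p)%N -> (p < n)%N -> cj (s p) (Vm b p 0) = Vm (~~ b) p 0.
Proof.
move=> h1 h2; case: b => //=.
by rewrite -cjM F4 //; ok.
Qed.

Definition V b p q := Vm b p (q - p.+1).
Definition Phi p q := if (p < q)%N then V false p q else V true q p.

Lemma VE b p q m : q = (p + m.+1)%N -> V b p q = Vm b p m.
Proof. by move=> ->; rewrite /V; congr Vm; lia. Qed.

Lemma swap_fix i z : z != i -> z != i.+1 -> swap i z = z.
Proof. by rewrite /swap => /negbTE -> /negbTE ->. Qed.
Lemma swap_ii i : swap i i = i.+1.
Proof. by rewrite /swap eqxx. Qed.
Lemma swap_i1 i : swap i i.+1 = i.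
Proof. rewrite /swap ifN ?eqxx //; lia. Qed.

Lemma Vrule b lo hi i : (1 <= lo)%N -> (lo < hi)%N -> (hi <= n)%N -> gen_ok n i ->
  ~ (i = lo /\ hi = lo.+1) ->
  cj (s i) (V b lo hi) = V b (swap i lo) (swap i hi) /\ (swap i lo < swap i hi)%N.
Proof.
move=> h1 h2 h3 hok hne; have [i1 i2] := okE hok.
have [m em] : exists m, hi = (lo + m.+1)%N by exists (hi - lo.+1); lia.
subst hi.
have : ((i + 2 <= lo)%N \/ (lo + m + 2 <= i)%N) \/ i = (lo + m.+1)%N \/
          (i = lo + m /\ lo < i)%N \/ (lo < i /\ i + 2 <= lo + m.+1)%N \/
          i.+1 = lo \/ (i = lo /\ 0 < m)%N \/ (i = lo /\ m = 0)%N by lia.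
case=> [far|[->|[[e1 e2]|[[e1 e2]|[e|[[e1 e2]|[e1 e2]]]]]]].
- rewrite !swap_fix; try lia; split => //.
  rewrite (VE b (m:=m)) //; apply: cj_comm; apply: Vm_far => //; lia.
- rewrite swap_fix ?swap_ii; try lia; split; last lia.
  by rewrite (VE b (m:=m)) // (VE b (m:=m.+1)) //; lia.
- destruct m as [|m]; first lia.
  have -> : (lo + m.+2 = i.+1)%N by lia.
  rewrite swap_fix ?swap_i1; try lia; split; last lia.
  rewrite (VE b (m:=m.+1)) //; last lia.
  rewrite (VE b (m:=m)) //.
  rewrite /= -cjM e1.
  have -> : (lo + m.+1 = lo + m + 1)%N by lia.
  rewrite SQ //; lia.
- rewrite !swap_fix; try lia; split => //.
  rewrite (VE b (m:=m)) //; apply: MID => //; lia.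
- subst lo.
  rewrite swap_i1 swap_fix; try lia; split; last lia.
  rewrite (VE b (m:=m)) // (VE b (m:=m.+1)) //; last lia.
  rewrite LEFT //; lia.
- subst lo; destruct m as [|m]; first lia.
  rewrite swap_ii swap_fix; try lia; split; last lia.
  rewrite (VE b (m:=m.+1)) // (VE b (m:=m)) //; last lia.
  rewrite RIGHT //; lia.
- exfalso; apply: hne; split => //; lia.
Qed.

Lemma boolP' (P : Prop) : P \/ ~ P.
Proof. exact: Classical_Prop.classic. Qed.

Lemma cj1 (z : G) : cj 1 z = z.
Proof. by rewrite /cj invg1 mulg1 mul1g. Qed.

Lemma swapK i z : swap i (swap i z) = z.
Proof.
rewrite /swap; have f : (i.+1 == i) = false by lia.
have [->|h1] := eqVneq z i; first by rewrite eqxx /= ?f.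
have [->|h2] := eqVneq z i.+1; first by rewrite ?f /= ?eqxx /= ?f ?eqxx.
by rewrite (negbTE h1) (negbTE h2).
Qed.

Lemma swap_range i z : gen_ok n i -> (1 <= z <= n)%N -> (1 <= swap i z <= n)%N.
Proof.
move=> /okE [h1 h2] hz; rewrite /swap.
case: ifP => [/eqP e|_]; first lia.
case: ifP => [/eqP e|_]; lia.
Qed.

Lemma Phi_rule p q i : (1 <= p <= n)%N -> (1 <= q <= n)%N -> p != q -> gen_ok n i ->
  cj (s i) (Phi p q) = Phi (swap i p) (swap i q).
Proof.
move=> hp hq hpq hok; have [i1 i2] := okE hok.
rewrite /Phi; case: (ltngtP p q) => [lt|gt|eq]; last by rewrite eq eqxx in hpq.
- have [[e1 e2]|ne] := boolP' (i = p /\ q = p.+1).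
    subst i q; rewrite swap_ii swap_i1 ltnNge leqnSn /=.
    rewrite (VE false (m:=0)) ?addn1 // (VE true (m:=0)) ?addn1 //.
  have [e l] := Vrule false (lo:=p) (hi:=q) (ltac:(lia)) lt (ltac:(lia)) hok ne.
  by rewrite e l.
- have [[e1 e2]|ne] := boolP' (i = q /\ p = q.+1).
    subst i p; rewrite swap_ii swap_i1 ltnSn /=.
    rewrite (VE false (m:=0)) ?addn1 // (VE true (m:=0)) ?addn1 //.
    by rewrite BASE //; lia.
  have [e l] := Vrule true (lo:=q) (hi:=p) (ltac:(lia)) gt (ltac:(lia)) hok ne.
  by rewrite e ifN //; lia.
Qed.

Fixpoint bprod (w : bword) : G := match w with
  | [::] => 1
  | l :: w' => (if l.2 then (s l.1)^-1 else s l.1) * bprod w' end.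

Lemma foldl_bar (w : bword) (g : nat -> nat) z :
  foldl (fun f l => fun x => swap l.1 (f x)) g w z =
  foldl (fun f l => fun x => swap l.1 (f x)) id w (g z).
Proof.
elim: w g z => [|l w IH] g z //.
transitivity (foldl (fun f l => fun x => swap l.1 (f x)) id w (swap l.1 (g z))).
  exact: (IH (fun x => swap l.1 (g x))).
symmetry; exact: (IH (fun x => swap l.1 x)).
Qed.

Lemma bar_cons l w z : bar (l :: w) z = bar w (swap l.1 z).
Proof. by rewrite /bar /= foldl_bar. Qed.

Lemma bar_out w z : bword_ok n w -> (z == 0)%N || (n < z)%N -> bar w z = z.
Proof.
elim: w => [|l w IH] //= /andP [hl hw] hz.
rewrite bar_cons swap_fix; first exact: IH.
  by move: hl; rewrite /gen_ok; lia.
by move: hl; rewrite /gen_ok; lia.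
Qed.

Lemma bar_surj w z : exists p, bar w p = z.
Proof.
elim: w => [|l w [p hp]]; first by exists z.
by exists (swap l.1 p); rewrite bar_cons swapK.
Qed.

Lemma main_conj w k : bword_ok n w -> gen_ok n k -> forall p q,
  (1 <= p <= n)%N -> (1 <= q <= n)%N -> bar w p = k -> bar w q = k.+1 ->
  cj (bprod w) (x k) = Phi p q.
Proof.
move=> + hk; elim: w => [|l w IH] /=.
  move=> _ p q hp hq; rewrite /bar /= => -> ->.
  rewrite cj1 /Phi ltnSn (VE false (m:=0)) //; lia.
move=> /andP [hl hw] p q hp hq; rewrite !bar_cons => e1 e2.
have hpq : p != q by apply/eqP => epq; rewrite epq e2 in e1; lia.
have hpq' : swap l.1 p != swap l.1 q.
  by apply/eqP => epq; move: (f_equal (swap l.1) epq); rewrite !swapK; apply/eqP.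
have IH' := IH hw _ _ (swap_range hl hp) (swap_range hl hq) e1 e2.
rewrite cjM IH'.
case: l.2.
  by rewrite -Phi_rule // cjK.
by rewrite Phi_rule ?swapK //; apply: swap_range.
Qed.

Theorem abstract_main k : gen_ok n k ->
  (forall w1 w2 : bword, bword_ok n w1 -> bword_ok n w2 ->
      (forall z : nat, bar w1 z = bar w2 z) ->
      cj (bprod w1) (x k) = cj (bprod w2) (x k)) /\
  (forall (w : bword) (j : nat), bword_ok n w -> gen_ok n j ->
      bar w j = k -> bar w j.+1 = k.+1 -> cj (bprod w) (x k) = x j).
Proof.
move=> hk; have [k1 k2] := okE hk; split.
  move=> w1 w2 h1 h2 e.
  have [p hp] := bar_surj w1 k; have [q hq] := bar_surj w1 k.+1.
  have rp : (1 <= p <= n)%N.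
    case: (boolP ((p == 0)%N || (n < p)%N)) => [c|]; last lia.
    by move: hp; rewrite bar_out //; lia.
  have rq : (1 <= q <= n)%N.
    case: (boolP ((q == 0)%N || (n < q)%N)) => [c|]; last lia.
    by move: hq; rewrite bar_out //; lia.
  rewrite (main_conj h1 hk rp rq hp hq) (main_conj h2 hk rp rq) -?e //.
move=> w j hw hj e1 e2; have [j1 j2] := okE hj.
rewrite (main_conj hw hk (p:=j) (q:=j.+1)) //; try lia.
rewrite /Phi ltnSn (VE false (m:=0)) //; lia.
Qed.
End Abstract.


Definition okw (A : pzRingType) (n : nat) (w : word A) : bool :=
  all (fun l : letter A => gen_ok n l.1.1) w.

Record Qt (A : pzRingType) (n : nat) := mkQ {
  qset : word A -> Prop ;
  qP : exists w, okw n w /\ qset = breq n w }.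

HB.instance Definition _ A n := gen_eqMixin (Qt A n).
HB.instance Definition _ A n := gen_choiceMixin (Qt A n).

Section Quot.
Variables (A : pzRingType) (n : nat).
Implicit Types u v w : word A.

Lemma Qt_eq (X Y : Qt A n) : qset X = qset Y -> X = Y.
Proof.
case: X => s1 p1; case: Y => s2 p2 /= e; subst s2.
by rewrite (proof_irrelevance _ p1 p2).
Qed.

Definition rep (X : Qt A n) : word A :=
  proj1_sig (constructive_indefinite_description _ (qP X)).
Lemma rep_spec (X : Qt A n) : okw n (rep X) /\ qset X = breq n (rep X).
Proof. exact: (proj2_sig (constructive_indefinite_description _ (qP X))). Qed.

Definition okpart w : word A := filter (fun l : letter A => gen_ok n l.1.1) w.
Lemma okpart_ok w : okw n (okpart w).
Proof. exact: filter_all. Qed.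
Lemma okpart_id w : okw n w -> okpart w = w.
Proof. by move/all_filterP. Qed.

Definition cl w : Qt A n :=
  @mkQ A n (breq n (okpart w)) (ex_intro _ (okpart w) (conj (okpart_ok w) erefl)).

Lemma cl_qset w : okw n w -> qset (cl w) = breq n w.
Proof. by move=> h; rewrite /= okpart_id. Qed.

Lemma breq_ext u v : breq n u v -> breq n u = breq n v.
Proof.
move=> e; apply: funext => t; apply: propext; split => h.
  exact: breq_trans (breq_sym e) h.
exact: breq_trans e h.
Qed.

Lemma cl_eq u v : okw n u -> okw n v -> breq n u v -> cl u = cl v.
Proof. by move=> hu hv e; apply: Qt_eq; rewrite !cl_qset // (breq_ext e). Qed.

Lemma cl_inj u v : okw n u -> okw n v -> cl u = cl v -> breq n u v.
Proof.
move=> hu hv e; have := f_equal (@qset A n) e; rewrite !cl_qset // => E.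
rewrite E; exact: breq_refl.
Qed.

Lemma clK X : cl (rep X) = X.
Proof. have [h e] := rep_spec X; apply: Qt_eq; by rewrite cl_qset. Qed.

Lemma Qind (X : Qt A n) : exists u, okw n u /\ X = cl u.
Proof. exists (rep X); split; [exact: (rep_spec X).1 | by rewrite clK]. Qed.

Lemma rep_cl u : okw n u -> breq n u (rep (cl u)).
Proof.
move=> hu; have [h e] := rep_spec (cl u); rewrite cl_qset // in e.
rewrite e; exact: breq_refl.
Qed.

Lemma rep_ok X : okw n (rep X).
Proof. exact: (rep_spec X).1. Qed.

Lemma okw_cat u v : okw n (u ++ v) = okw n u && okw n v.
Proof. exact: all_cat. Qed.

Lemma okw_inv w : okw n (inv_word w) = okw n w.
Proof. rewrite /okw /inv_word all_rev all_map; apply: eq_all; by case=> [[i b] e]. Qed.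

Lemma breq_catl u v v' : breq n v v' -> breq n (u ++ v) (u ++ v').
Proof. move=> e; apply: breq_cat => //; exact: breq_refl. Qed.
Lemma breq_catr u u' v : breq n u u' -> breq n (u ++ v) (u' ++ v).
Proof. move=> e; apply: breq_cat => //; exact: breq_refl. Qed.

Lemma pair_cancel (l : letter A) : gen_ok n l.1.1 ->
  breq n [:: inv_letter l; l] [::] /\ breq n [:: l; inv_letter l] [::].
Proof.
case: l => [[i b] [|]] /= h; split.
- exact: (breq_invr b h).
- exact: (breq_invl b h).
- exact: (breq_invl b h).
- exact: (breq_invr b h).
Qed.

Lemma inv_cancel w : okw n w ->
  breq n (inv_word w ++ w) [::] /\ breq n (w ++ inv_word w) [::].
Proof.
elim: w => [|l w IH] /=; first by split; exact: breq_refl.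
move=> /andP [hl hw]; have [IH1 IH2] := IH hw; have [c1 c2] := pair_cancel hl.
rewrite /inv_word /= rev_cons -cats1 -/(inv_word w); split.
  rewrite -catA /=.
  apply: breq_trans (IH1).
  apply: breq_catl.
  have -> : inv_letter l :: l :: w = [:: inv_letter l; l] ++ w by [].
  have {2}-> : w = [::] ++ w by [].
  exact: breq_catr.
have -> : l :: w ++ inv_word w ++ [:: inv_letter l] =
          [:: l] ++ (w ++ inv_word w) ++ [:: inv_letter l] by rewrite /= catA.
apply: breq_trans c2.
have -> : [:: l; inv_letter l] = [:: l] ++ [::] ++ [:: inv_letter l] by [].
apply: breq_catl; exact: breq_catr.
Qed.

Definition mulQ (X Y : Qt A n) := cl (rep X ++ rep Y).
Definition invQ (X : Qt A n) := cl (inv_word (rep X)).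
Definition oneQ := cl [::].

Lemma mul_cl u v : okw n u -> okw n v -> mulQ (cl u) (cl v) = cl (u ++ v).
Proof.
move=> hu hv; apply: cl_eq; rewrite ?okw_cat ?rep_ok ?hu ?hv //.
apply: breq_cat; apply: breq_sym; exact: rep_cl.
Qed.

Lemma mulQA : associative mulQ.
Proof.
move=> X Y Z.
case: (Qind X) => u [hu ->]; case: (Qind Y) => v [hv ->]; case: (Qind Z) => t [ht ->].
by rewrite !mul_cl ?okw_cat ?hu ?hv ?ht // catA.
Qed.

Lemma mul1Q : left_id oneQ mulQ.
Proof. move=> X; case: (Qind X) => u [hu ->]; by rewrite /oneQ mul_cl. Qed.
Lemma mulQ1 : right_id oneQ mulQ.
Proof. move=> X; case: (Qind X) => u [hu ->]; by rewrite /oneQ mul_cl // cats0. Qed.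

Lemma mulVQ : left_inverse oneQ invQ mulQ.
Proof.
move=> X; rewrite /invQ -{2}(clK X) mul_cl ?okw_inv ?rep_ok //.
apply: cl_eq; rewrite ?okw_cat ?okw_inv ?rep_ok //.
exact: (inv_cancel (rep_ok X)).1.
Qed.
Lemma mulQV : right_inverse oneQ invQ mulQ.
Proof.
move=> X; rewrite /invQ -{1}(clK X) mul_cl ?okw_inv ?rep_ok //.
apply: cl_eq; rewrite ?okw_cat ?okw_inv ?rep_ok //.
exact: (inv_cancel (rep_ok X)).2.
Qed.
End Quot.

HB.instance Definition _ A n :=
  isGroup.Build (Qt A n) (@mulQA A n) (@mul1Q A n) (@mulQ1 A n) (@mulVQ A n) (@mulQV A n).

Import GRing.Theory.

Section Final.
Variables (A : pzRingType) (n : nat).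
Local Open Scope group_scope.

Lemma clM (u v : word A) : okw n u -> okw n v -> cl n u * cl n v = cl n (u ++ v).
Proof. exact: mul_cl. Qed.

Definition Yq i (b : A) : Qt A n := cl n [:: y i b].

Lemma okw1 i (b : A) e : gen_ok n i -> okw n [:: (i, b, e)].
Proof. by rewrite /okw /= andbT. Qed.

Lemma cl_yinv i (b : A) : gen_ok n i -> cl n [:: yinv i b] = (Yq i b)^-1.
Proof.
move=> h; symmetry; apply: mulg1_eq; rewrite /Yq clM ?okw1 //.
apply: cl_eq; rewrite ?okw_cat ?okw1 //; exact: breq_invr.
Qed.

Lemma R1q i b c : gen_ok n i ->
  Yq i b * Yq i 0%R * Yq i c = Yq i 0%R * Yq i 0%R * Yq i (b + c)%R.
Proof.
move=> h; rewrite /Yq !clM ?okw_cat ?okw1 //=.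
by apply: cl_eq; rewrite ?okw_cat ?okw1 //=; [rewrite /okw /= h | rewrite /okw /= h | exact: breq_rel1].
Qed.

Lemma okwE (w : word A) : okw n w = all (fun l : letter A => gen_ok n l.1.1) w.
Proof. by []. Qed.

Lemma R2q i j b c : gen_ok n i -> gen_ok n j -> (i + 2 <= j)%N \/ (j + 2 <= i)%N ->
  Yq i b * Yq j c = Yq j c * Yq i b.
Proof.
move=> hi hj h; rewrite /Yq !clM ?okw1 //.
apply: cl_eq; rewrite ?okwE /= ?hi ?hj //; apply: breq_rel2 => //; lia.
Qed.

Lemma R3q i b c d : gen_ok n i -> gen_ok n i.+1 ->
  Yq i b * Yq i.+1 c * Yq i d = Yq i.+1 d * Yq i (c + b * d)%R * Yq i.+1 b.
Proof.
move=> h h1; rewrite /Yq !clM ?okw_cat ?okw1 //=.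
by apply: cl_eq; rewrite ?okwE /= ?h ?h1 //; exact: breq_rel3.
Qed.

Lemma okw_emb (w : bword) : bword_ok n w -> okw n (emb A w).
Proof. by rewrite okwE /emb all_map. Qed.

Lemma cl_emb (w : bword) : bword_ok n w -> cl n (emb A w) = bprod Yq w.
Proof.
elim: w => [|l w IH] //= /andP [hl hw].
have -> : (l.1, 0%R, l.2) :: emb A w = [:: (l.1, 0%R, l.2)] ++ emb A w by [].
rewrite -clM ?okw1 ?okw_emb // IH //.
case: l hl => i e /= hl; case: e => //.
by rewrite -/(yinv i 0%R) cl_yinv.
Qed.

Lemma cl_inv (w : word A) : okw n w -> cl n (inv_word w) = (cl n w)^-1.
Proof.
move=> h; symmetry; apply: mulg1_eq; rewrite clM ?okw_inv //.
apply: cl_eq; rewrite ?okw_cat ?okw_inv ?h //; exact: (inv_cancel h).2.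
Qed.

Lemma cl_conjk (w : bword) k (a : A) : bword_ok n w -> gen_ok n k ->
  cl n (conjk A w k a) = cj (bprod Yq w) (x Yq a k).
Proof.
move=> hw hk; rewrite /conjk.
have ok2 : okw n [:: y k a; yinv k 0%R] by rewrite okwE /= hk.
rewrite -!clM ?okw_cat ?okw_inv ?okw_emb ?ok2 // cl_inv ?okw_emb // cl_emb //.
have -> : [:: y k a; yinv k 0%R] = [:: y k a] ++ [:: yinv k 0%R] by [].
rewrite -clM ?okw1 // cl_yinv //.
by rewrite /cj /x /s mulgA.
Qed.

Lemma okw_conjk (w : bword) k (a : A) : bword_ok n w -> gen_ok n k ->
  okw n (conjk A w k a).
Proof.
move=> hw hk; rewrite /conjk !okw_cat okw_inv okw_emb //=.
by rewrite hk.
Qed.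
End Final.

Local Open Scope ring_scope.
Theorem proposition2p4 (A : pzRingType) (n k : nat) (a : A) :
  (2 <= n)%N -> gen_ok n k ->
  (forall w1 w2 : bword, bword_ok n w1 -> bword_ok n w2 ->
      (forall x : nat, bar w1 x = bar w2 x) ->
      breq n (conjk A w1 k a) (conjk A w2 k a)) /\
  (forall (w : bword) (j : nat), bword_ok n w -> gen_ok n j ->
      bar w j = k -> bar w j.+1 = k.+1 ->
      breq n (conjk A w k a) [:: y j a; yinv j 0]).
Proof.
move=> hn hk.
have [P1 P2] := abstract_main a (@R1q A n) (@R2q A n) (@R3q A n) hk.
split.
  move=> w1 w2 h1 h2 e.
  apply: (cl_inj (okw_conjk a h1 hk) (okw_conjk a h2 hk)).
  by rewrite !cl_conjk // (P1 w1 w2).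
move=> w j hw hj e1 e2.
have okj : okw n [:: y j a; yinv j 0%R] by rewrite okwE /= hj.
apply: (cl_inj (okw_conjk a hw hk) okj).
rewrite cl_conjk // (P2 w j) //.
have -> : [:: y j a; yinv j 0%R] = [:: y j a] ++ [:: yinv j 0%R] by [].
by rewrite -clM ?okw1 // cl_yinv.
Qed.
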